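(* Assume $q\neq0$. For all integers $n,r,s$, $$h_{n+s}h_{n-r}-h_nh_{n-r+s}=Eq^{n-r}\left(v_{r+s}-q^sv_{r-s}\right).$$
   Context: Let $p,q,a,b$ be complex numbers with $q\neq 0$, and let $E=b^2-abp+a^2q$. The sequence $(v_n)$ is defined by $v_0=2$, $v_1=p$, $v_n=pv_{n-1}-qv_{n-2}$. The Horadam-Lucas sequence $(h_n)$ is defined by $h_0=2b-ap$, $h_1=bp-2aq$, $h_n=ph_{n-1}-qh_{n-2}$. Both are extended to all integer indices by $x_{n-2}=(px_{n-1}-x_n)/q$. *)

(* Defs.v *)
(* Complex numbers are modelled as R[i] = complex R for R : realType
   (from mathcomp-real-closed), i.e. the genuine field C when R is the reals. *)
From HB Require Import structures.
From mathcomp Require Import all_boot all_order all_algebra.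
From mathcomp Require Import complex.
From mathcomp Require Import reals.
Set Implicit Arguments. Unset Strict Implicit. Unset Printing Implicit Defensive.
Import Order.TTheory GRing.Theory Num.Theory.
Local Open Scope ring_scope.

Section Seqs.
Variable K : fieldType.
Variables (p q x0 x1 : K).

(* fwd_pair n = (x_n, x_{n+1}) for n >= 0, using x_n = p x_{n-1} - q x_{n-2} *)
Fixpoint fwd_pair (n : nat) : K * K :=
  match n with
  | 0%N => (x0, x1)
  | k.+1 => let pr := fwd_pair k in (pr.2, p * pr.2 - q * pr.1)
  end.

(* bwd_pair n = (x_{-n}, x_{-n+1}) for n >= 0, using x_{m-2} = (p x_{m-1} - x_m)/q *)
Fixpoint bwd_pair (n : nat) : K * K :=
  match n with
  | 0%N => (x0, x1)
  | k.+1 => let pr := bwd_pair k in ((p * pr.1 - pr.2) / q, pr.1)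
  end.

Definition lrec (n : int) : K :=
  match n with
  | Posz k => (fwd_pair k).1
  | Negz k => (bwd_pair k.+1).1  (* Negz k = -(k+1) *)
  end.
End Seqs.

Definition vseq (K : fieldType) (p q : K) : int -> K := lrec p q 2 p.
Definition hseq (K : fieldType) (p q a b : K) : int -> K :=
  lrec p q (2 * b - a * p) (b * p - 2 * a * q).
Definition Econst (K : fieldType) (p q a b : K) : K := b ^+ 2 - a * b * p + a ^+ 2 * q.

(* Main.v *)
Require Import Defs.
From HB Require Import structures.
From mathcomp Require Import all_boot all_order all_algebra.
From mathcomp Require Import complex.
From mathcomp Require Import reals.
From mathcomp Require Import ring zify.
Set Implicit Arguments. Unset Strict Implicit. Unset Printing Implicit Defensive.
Import Order.TTheory GRing.Theory Num.Theory.
Local Open Scope ring_scope.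

Section Gen.
Variable K : fieldType.
Variables (p q : K).
Hypothesis hq : q != 0.

Definition isrec (f : int -> K) := forall k, f (k + 2) = p * f (k + 1) - q * f k.

Lemma lrec_neg x0 x1 (m : nat) : lrec p q x0 x1 (- m%:Z) = (bwd_pair p q x0 x1 m).1.
Proof. by case: m => // m; rewrite -NegzE. Qed.

Lemma lrec_rec x0 x1 : isrec (lrec p q x0 x1).
Proof.
move=> [m|m].
  rewrite (_ : m%:Z + 2 = (m.+2)%:Z); last by lia.
  by rewrite (_ : m%:Z + 1 = (m.+1)%:Z); last by lia.
case: m => [|m].
  rewrite (_ : Negz 0 + 2 = 1); last by lia.
  rewrite (_ : Negz 0 + 1 = 0); last by lia.
  rewrite /=. field. exact: hq.
rewrite (_ : Negz m.+1 + 2 = - m%:Z); last by lia.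
rewrite (_ : Negz m.+1 + 1 = - (m.+1)%:Z); last by lia.
rewrite !lrec_neg NegzE lrec_neg /=.
case: m => [|m] /=; field; exact: hq.
Qed.

Lemma isrec_lin f g a b : isrec f -> isrec g -> isrec (fun k => a * f k + b * g k).
Proof. by move=> hf hg k; rewrite hf hg; ring. Qed.

Lemma isrec_shift f c : isrec f -> isrec (fun k => f (k + c)).
Proof.
move=> hf k; move: (hf (k + c)).
have -> : k + c + 2 = k + 2 + c by lia.
by have -> : k + c + 1 = k + 1 + c by lia.
Qed.

Lemma isrec_unique f g : isrec f -> isrec g -> f 0 = g 0 -> f 1 = g 1 ->
  forall k, f k = g k.
Proof.
move=> hf hg h0 h1.
pose d k := f k - g k.
have hd : isrec d by move=> k; rewrite /d hf hg; ring.
have d0 : d 0 = 0 by rewrite /d h0 subrr.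
have d1 : d 1 = 0 by rewrite /d h1 subrr.
suff : forall k, d k = 0 by move=> H k; apply/eqP; rewrite -subr_eq0; apply/eqP/H.
have fw : forall m : nat, d m%:Z = 0 /\ d (m.+1)%:Z = 0.
  elim=> [|m [IH1 IH2]]; first by [].
  split=> //; have := hd m%:Z.
  have -> : m%:Z + 2 = (m.+2)%:Z by lia.
  have -> : m%:Z + 1 = (m.+1)%:Z by lia.
  by rewrite IH1 IH2 mulr0 mulr0 subrr.
have bw : forall m : nat, d (- m%:Z) = 0 /\ d (- m%:Z + 1) = 0.
  elim=> [|m [IH1 IH2]]; first by [].
  have := hd (- (m.+1)%:Z).
  have -> : - (m.+1)%:Z + 2 = - m%:Z + 1 by lia.
  have -> : - (m.+1)%:Z + 1 = - m%:Z by lia.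
  rewrite IH1 IH2 mulr0 sub0r => /esym /eqP; rewrite oppr_eq0 mulf_eq0 (negPf hq) /= => /eqP ->.
  by split.
move=> [m|m]; first by case: (fw m).
by rewrite NegzE; case: (bw m.+1).
Qed.

Lemma geo (D : int -> K) : (forall k, D (k + 1) = q * D k) -> forall k, D k = q ^ k * D 0.
Proof.
move=> hD.
have fw : forall m : nat, D m%:Z = q ^ m%:Z * D 0.
  elim=> [|m IH]; first by rewrite expr0z mul1r.
  rewrite (_ : (m.+1)%:Z = m%:Z + 1); last by lia.
  by rewrite hD IH expfzDr // expr1z; ring.
have bw : forall m : nat, D (- m%:Z) = q ^ (- m%:Z) * D 0.
  elim=> [|m IH]; first by rewrite expr0z mul1r.
  have := hD (- (m.+1)%:Z).
  rewrite (_ : - (m.+1)%:Z + 1 = - m%:Z); last by lia.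
  rewrite IH => E.
  have -> : D (- (m.+1)%:Z) = q^-1 * (q * D (- (m.+1)%:Z)) by rewrite mulrA mulVf // mul1r.
  rewrite -E (_ : - m%:Z = - (m.+1)%:Z + 1); last by lia.
  by rewrite expfzDr // expr1z; field.
move=> [m|m]; first exact: fw.
by rewrite NegzE; apply: bw.
Qed.

Lemma geo2 (D : int -> K) : (forall k, D (k + 1) = q * D k) -> forall n m, D n = q ^ (n - m) * D m.
Proof.
move=> hD n m; rewrite (geo hD n) (geo hD m) mulrA -expfzDr //.
by rewrite (_ : n - m + m = n); last by lia.
Qed.

Lemma casor x y : isrec x -> isrec y ->
  forall k, x (k + 1 + 1) * y (k + 1) - x (k + 1) * y (k + 1 + 1)
          = q * (x (k + 1) * y k - x k * y (k + 1)).
Proof.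
move=> hx hy k; rewrite (_ : k + 1 + 1 = k + 2); last by lia.
by rewrite hx hy; ring.
Qed.


Lemma vrec : isrec (vseq p q). Proof. exact: lrec_rec. Qed.

Lemma vm1 : vseq p q (-1) = (p * 2 - p) / q. Proof. by []. Qed.

Lemma vrefl k : q ^ k * vseq p q (- k) = vseq p q k.
Proof.
move: k; apply: (isrec_unique (f := fun k => q ^ k * vseq p q (- k))).
- move=> k /=.
  have R := vrec (- k - 2).
  have e1 : - k - 2 + 2 = - k by lia.
  have e2 : - k - 2 + 1 = - (k + 1) by lia.
  have e3 : - k - 2 = - (k + 2) by lia.
  rewrite e1 e2 e3 in R.
  rewrite (expfzDr _ _ hq) (expfzDr _ _ hq) R.
  rewrite (expfzDr _ _ hq) expr1z; ring.
- exact: vrec.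
- by rewrite expr0z mul1r oppr0.
- by rewrite expr1z vm1 /=; field.
Qed.

Lemma refl2 r s : q ^ s * vseq p q (r - s) = q ^ r * vseq p q (s - r).
Proof.
rewrite -(vrefl (s - r)) (_ : - (s - r) = r - s); last by lia.
rewrite mulrA -(expfzDr _ _ hq).
by rewrite (_ : r + (s - r) = s); last by lia.
Qed.

Variables (a b : K).
Let h := hseq p q a b.
Let v := vseq p q.
Lemma hrec : isrec h. Proof. exact: lrec_rec. Qed.

Lemma base r : h (r + 1) * h 0 - h r * h 1 = Econst p q a b * (v (r + 1) - q * v (r - 1)).
Proof.
move: r; apply: (isrec_unique (f := fun r => h (r + 1) * h 0 - h r * h 1)
   (g := fun r => Econst p q a b * (v (r + 1) - q * v (r - 1)))).
- move=> k /=.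
  have -> : k + 2 + 1 = k + 1 + 2 by lia.
  rewrite !hrec; ring.
- move=> k /=.
  have -> : k + 2 + 1 = k + 1 + 2 by lia.
  have -> : k + 2 - 1 = k - 1 + 2 by lia.
  have -> : k + 1 - 1 = k - 1 + 1 by lia.
  rewrite /v !vrec; ring.
- change (h 1 * h 0 - h 0 * h 1 = Econst p q a b * (v 1 - q * v (-1))).
  by rewrite /v vm1 /h /hseq /Econst /=; field.
  change (h 2 * h 0 - h 1 * h 1 = Econst p q a b * (v 2 - q * v 0)).
  rewrite /v /h /hseq /vseq /Econst /=; ring.
Qed.

Lemma main_gen n r s : h (n + s) * h (n - r) - h n * h (n - r + s)
  = Econst p q a b * q ^ (n - r) * (v (r + s) - q ^ s * v (r - s)).
Proof.
rewrite /v refl2 -/v.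
move: s; apply: (isrec_unique (f := fun s => h (n + s) * h (n - r) - h n * h (n - r + s))
   (g := fun s => Econst p q a b * q ^ (n - r) * (v (r + s) - q ^ r * v (s - r)))).
- move=> k /=.
  rewrite (addrA n k 2) (addrA n k 1) (addrA (n - r) k 2) (addrA (n - r) k 1).
  rewrite !hrec; ring.
- move=> k /=; rewrite (addrA r k 2) (addrA r k 1).
  have -> : k + 2 - r = k - r + 2 by lia.
  have -> : k + 1 - r = k - r + 1 by lia.
  rewrite /v !vrec; ring.
- by rewrite /= !addr0 subrr sub0r /v vrefl subrr mulr0.
- rewrite /= -/v -(refl2 r 1) expr1z.
  pose D k := h (k + 1) * h (k - r) - h k * h (k + 1 - r).
  have hD : forall k, D (k + 1) = q * D k.
    move=> k; rewrite /D.
    have -> : k + 1 + 1 = k + 2 by lia.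
    have -> : k + 1 - r = k - r + 1 by lia.
    have -> : k + 2 - r = k - r + 2 by lia.
    rewrite !hrec; ring.
  have := geo2 hD n r.
  rewrite /D subrr (_ : r + 1 - r = 1); last by lia.
  rewrite base (_ : n + 1 - r = n - r + 1); last by lia.
  by move=> ->; rewrite /v; ring.
Qed.

End Gen.

Local Open Scope complex_scope.

Theorem mainTheorem9 (R : realType) (p q a b : R[i]) (hq : q != 0) (n r s : int) :
  hseq p q a b (n + s) * hseq p q a b (n - r)
    - hseq p q a b n * hseq p q a b (n - r + s)
  = Econst p q a b * q ^ (n - r) * (vseq p q (r + s) - q ^ s * vseq p q (r - s)).
Proof. exact: (@main_gen _ p q hq a b n r s). Qed.
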